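(* Let $N>2$ be an odd positive integer, $K$ a positive integer, and $0<Z_x\le N$, $0<Z_y\le K$ integers. Let $f:\mathbb{Z}_N\to\mathbb{Z}_K$ be such that for all integers $a,b$ with $-Z_x<a<Z_x$, $a\ne0$, $-Z_y<b<Z_y$, the equation $f(x+a)-f(x)=b$ (with $x+a$ computed in $\mathbb{Z}_N$ and the equation in $\mathbb{Z}_K$) has at most one solution $x\in\mathbb{Z}_N$. For $0\le k<N$ let $\mathbf{a}_k=(a_k(0),\dots,a_k(K-1))$ with $a_k(t)=\omega_K^{tf(k)}$. Let $\mathbf{h}_0,\dots,\mathbf{h}_{N-1}$ be unimodular complex sequences of length $N$ such that for all $0\le i\ne j<N$ and all $0\le v<N$, $$\Big|\sum_{n=0}^{N-1}h_i(n)h_j^*(n)\Big|\le 1,\qquad \Big|\sum_{n=0}^{N-1}h_i(n)h_j^*(n)\omega_N^{nv}\Big|<N.$$ For $0\le i<N$ define $\mathbf{s}_i$ of length $NK$ by $s_i(tN+k)=h_i(k)a_k(t)$ for $0\le t<K$, $0\le k<N$, and let $\mathcal{S}=\{\mathbf{s}_0,\dots,\mathbf{s}_{N-1}\}$. Then $\mathcal{S}$ is a polyphase periodic $(N,NK,\Pi,K)$-LAZ sequence set with $\Pi=(-Z_x,Z_x)\times(-Z_y,Z_y)$; that is, for all integers $(\tau,v)\in\Pi$: $|AF_{\mathbf{s}_i}(\tau,v)|\le K$ for every $i$ whenever $(\tau,v)\neq(0,0)$, and $|AF_{\mathbf{s}_i,\mathbf{s}_j}(\tau,v)|\le K$ for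 all $i\neq j$.
   Context: $\omega_L=e^{2\pi\sqrt{-1}/L}$, $z^*$ is complex conjugation, and a sequence is unimodular if all entries have modulus 1. For sequences $\mathbf{a},\mathbf{b}$ of length $L$, the periodic cross-ambiguity function is $AF_{\mathbf{a},\mathbf{b}}(\tau,v)=\sum_{t=0}^{L-1}a(t)b^*(\langle t+\tau\rangle_L)\omega_L^{vt}$ ($\langle\cdot\rangle_L$ = reduction mod $L$), and $AF_{\mathbf{a}}=AF_{\mathbf{a},\mathbf{a}}$. A set of $M$ sequences of length $L$ is an $(M,L,\Pi,\theta)$-LAZ periodic sequence set if the maximum of $|AF_{\mathbf{a}}(\tau,v)|$ over sequences $\mathbf{a}$ in the set and $(0,0)\ne(\tau,v)\in\Pi$, and of $|AF_{\mathbf{a},\mathbf{b}}(\tau,v)|$ over distinct $\mathbf{a},\mathbf{b}$ in the set and $(\tau,v)\in\Pi$, is $\theta$ (here: at most $\theta$). *)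

(* Defs.v *)
From HB Require Import structures.
From mathcomp Require Import all_boot all_order all_algebra.
From mathcomp Require Import reals trigo.
From mathcomp Require Import complex.
Set Implicit Arguments.
Unset Strict Implicit.
Unset Printing Implicit Defensive.
Import Order.TTheory GRing.Theory Num.Theory.
Local Open Scope ring_scope.

Definition modI (L : nat) (z : int) : nat := `|(z %% (L%:Z))%Z|%N.

Definition omega (R : realType) (L : nat) : R[i] :=
  Complex (cos (2 * pi / L%:R)) (sin (2 * pi / L%:R)).

(* periodic cross-ambiguity function of sequences a, b of length L
   (sequences are functions nat -> C, only the entries 0..L-1 are used) *)
Definition AF (R : realType) (L : nat) (a b : nat -> R[i]) (tau v : int) : R[i] :=
  \sum_(t < L) a t * (b (modI L (t%:Z + tau)))^* * (omega R L) ^ (v * t%:Z).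

Definition aseq (R : realType) (K : nat) (f : nat -> nat) (k t : nat) : R[i] :=
  (omega R K) ^+ (t * f k).

(* s_i(tN + k) = h_i(k) a_k(t), 0 <= t < K, 0 <= k < N *)
Definition sseq (R : realType) (N K : nat) (f : nat -> nat)
  (h : nat -> nat -> R[i]) (i : nat) (m : nat) : R[i] :=
  h i (m %% N)%N * aseq R K f (m %% N)%N (m %/ N)%N.

(* Main.v *)
Require Import Defs.
From HB Require Import structures.
From mathcomp Require Import all_boot all_order all_algebra.
From mathcomp Require Import reals trigo.
From mathcomp Require Import complex.
From mathcomp Require Import zify ring lra.
Import Order.TTheory GRing.Theory Num.Theory.
Local Open Scope ring_scope.

Section Trig.
Variable R : realType.

Lemma mulcE (a b c d : R) :
  (Complex a b : R[i]) * Complex c d = Complex (a*c - b*d) (a*d + b*c).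
Proof. reflexivity. Qed.

Lemma demoivre (x : R) n :
  (Complex (cos x) (sin x) : R[i]) ^+ n = Complex (cos (x *+ n)) (sin (x *+ n)).
Proof.
elim: n => [|n IH]; first by rewrite expr0 mulr0n cos0 sin0.
rewrite exprS IH mulcE mulrS cosD sinD; congr Complex; ring.
Qed.

Lemma omegaX L n : omega R L ^+ n =
  Complex (cos ((2 * pi / L%:R) *+ n)) (sin ((2 * pi / L%:R) *+ n)).
Proof. by rewrite /omega demoivre. Qed.

Lemma omegaL L : (0 < L)%N -> omega R L ^+ L = 1.
Proof.
move=> L0; rewrite omegaX -mulr_natr divfK ?pnatr_eq0 -?lt0n //.
by rewrite mulr_natl cos2pi sin2pi.
Qed.

Lemma omega_neq1 L r : (0 < r < L)%N -> omega R L ^+ r != 1.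
Proof.
move=> /andP [r0 rL]; have L0 : (0 < L)%N by apply: ltn_trans rL.
pose c : R := pi / L%:R.
have c0 : 0 < c by rewrite divr_gt0 ?pi_gt0 // ltr0n.
have ex : (2 * pi / L%:R) *+ r = c * (2 * r)%:R.
  by rewrite /c natrM -mulr_natr; ring.
have ep : pi = c * L%:R by rewrite /c divfK // pnatr_eq0 -lt0n.
rewrite omegaX ex; apply/negP => /eqP [] hc hs.
case: (ltngtP (2 * r) L) => h.
- have : 0 < sin (c * (2 * r)%:R).
    apply: sin_gt0_pi; rewrite mulr_gt0 ?ltr0n ?muln_gt0 //=.
    by rewrite ep ltr_pM2l // ltr_nat.
  by rewrite hs ltxx.
- have : sin (c * (2 * r)%:R) < 0.
    have -> : c * (2 * r)%:R = (c * (2 * r)%:R - pi) + pi by ring.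
    rewrite sinDpi oppr_lt0; apply: sin_gt0_pi.
    rewrite subr_gt0 {1 3}ep ltr_pM2l ?ltr_nat // h /= ltrBlDr.
    rewrite ep -mulrDr ltr_pM2l // -natrD ltr_nat.
    lia.
  by rewrite hs ltxx.
- move: hc; rewrite h -ep cospi => /eqP; rewrite -subr_eq0; lra.
Qed.


Lemma omegaNK N K : (0 < N)%N -> (0 < K)%N -> omega R (N * K) ^+ N = omega R K.
Proof.
move=> N0 K0; rewrite omegaX /omega; congr (Complex (cos _) (sin _));
rewrite -mulr_natr natrM; field; by rewrite !pnatr_eq0 -!lt0n N0 K0.
Qed.

Lemma omega_norm L : (0 < L)%N -> `|omega R L| = 1.
Proof.
move=> L0; apply/eqP; rewrite -(pexpr_eq1 L0) ?normr_ge0 // -normrX omegaL //.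
by rewrite normr1.
Qed.

Lemma omega_neq0 L : (0 < L)%N -> omega R L != 0.
Proof. by move=> L0; rewrite -normr_eq0 omega_norm // oner_eq0. Qed.

Lemma normXz (x : R[i]) z : `|x| = 1 -> `|x ^ z| = 1.
Proof.
move=> nx; case: z => n; first by rewrite -exprnP normrX nx expr1n.
by rewrite NegzE -exprnN normfV normrX nx expr1n invr1.
Qed.

Lemma conjXz (x : R[i]) z : `|x| = 1 -> (x ^ z)^* = x ^ (- z).
Proof.
move=> nx; have n1 := normXz x z nx.
transitivity ((x ^ z)^-1); first by rewrite invC_norm n1 expr1n invr1 mul1r.
by rewrite -exprN1 exprz_exp mulrN1.
Qed.

Variable K : nat.
Hypothesis K0 : (0 < K)%N.
Definition E (z : int) := omega R K ^ z.

Lemma ED a b : E (a + b) = E a * E b.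
Proof. by rewrite /E expfzDr // omega_neq0. Qed.

Lemma Enat n : omega R K ^+ n = E n%:Z.
Proof. by rewrite /E exprnP. Qed.

Lemma E_dvd z : (K %| z)%Z -> E z = 1.
Proof.
by case/dvdzP => c ->; rewrite /E mulrC -exprz_exp -exprnP omegaL // exp1rz.
Qed.

Lemma E_mod z : E z = E (z %% K)%Z.
Proof.
rewrite {1}(divz_eq z K) ED E_dvd ?mul1r // dvdz_mull // dvdzz.
Qed.

Lemma E_ndvd z : ~~ (K %| z)%Z -> E z != 1.
Proof.
move=> nd; rewrite E_mod.
have K0' : (K%:Z != 0) by rewrite eqz_nat -lt0n.
have ge := modz_ge0 z K0'; have lt := ltz_mod z K0'.
have -> : (z %% K)%Z = (`|(z %% K)%Z|%N)%:Z by rewrite gez0_abs.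
rewrite -Enat; apply: omega_neq1; apply/andP; split.
  rewrite absz_gt0; apply: contra nd => /eqP h; exact/dvdz_mod0P.
by rewrite -ltz_nat gez0_abs //; move: lt; rewrite normr_nat.
Qed.

Lemma E_norm z : `|E z| = 1.
Proof. by apply: normXz; apply: omega_norm. Qed.

Lemma E_conj z : (E z)^* = E (- z).
Proof. by apply: conjXz; apply: omega_norm. Qed.

Lemma EXn z (t : nat) : E z ^+ t = E (z * t%:Z).
Proof. by rewrite /E exprnP exprz_exp. Qed.

Lemma geomE e : \sum_(t < K) E e ^+ t = if (K %| e)%Z then K%:R else 0.
Proof.
case: ifP => d.
  by rewrite E_dvd // (eq_bigr (fun _ => 1)) => [|t _]; rewrite ?expr1n // sumr_const card_ord.
have /eqP := subrX1 (E e) K.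
rewrite EXn E_dvd ?dvdz_mull ?dvdzz // subrr eq_sym mulf_eq0 subr_eq0.
by rewrite (negbTE (E_ndvd e (negbT d))) /= => /eqP.
Qed.

End Trig.

Lemma sum_split (V : nmodType) N K (F : nat -> V) :
  \sum_(m < N * K) F m = \sum_(t < K) \sum_(k < N) F (t * N + k)%N.
Proof.
elim: K => [|K IH]; first by rewrite muln0 !big_ord0.
rewrite big_ord_recr /= -IH -!(big_mkord xpredT) mulnS addnC.
rewrite (big_cat_nat _ (leq_addr N (N * K))) //=; congr (_ + _).
by rewrite -{1}[(N * K)%N]add0n big_addn addKn big_mkord; apply: eq_bigr => k _; rewrite addnC mulnC.
Qed.

Section Main.
Variable R : realType.
Variables (N K : nat) (f : nat -> nat) (h : nat -> nat -> R[i]).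
Hypotheses (N0 : (0 < N)%N) (K0 : (0 < K)%N).

Lemma sseq_nat i t k : (k < N)%N ->
  sseq N K f h i (t * N + k) = h i k * E R K (t%:Z * (f k)%:Z).
Proof.
move=> kN; rewrite /sseq /aseq modnMDl modn_small // divnMDl // divn_small //.
by rewrite addn0 Enat PoszM.
Qed.

Lemma modI_lt x : (modI N x < N)%N.
Proof.
have N0z : N%:Z != 0 by rewrite eqz_nat -lt0n.
by rewrite -ltz_nat /modI gez0_abs ?modz_ge0 //; move: (ltz_mod x N0z); rewrite ger0_norm.
Qed.

Lemma sseq_shift j x D : x = D * N%:Z + (modI N x)%:Z ->
  sseq N K f h j (modI (N * K) x) = h j (modI N x) * E R K (D * (f (modI N x))%:Z).
Proof.
move=> hD.
have N0z : N%:Z != 0 by rewrite eqz_nat -lt0n.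
have NK0 : (N * K)%:Z != 0 by rewrite eqz_nat muln_eq0 negb_or -!lt0n N0 K0.
set r := modI (N * K) x; set k' := modI N x.
have hr : r%:Z = (x %% (N * K)%:Z)%Z by rewrite /r /modI gez0_abs // modz_ge0.
have hx := divz_eq x (N * K)%:Z.
set q := (x %/ (N * K)%:Z)%Z in hx.
have hrk : (r %% N)%N = k'.
  apply/eqP; rewrite -eqz_nat -modz_nat hr /k' /modI gez0_abs ?modz_ge0 //.
  rewrite [X in _ == (X %% _)%Z]hx.
  have -> : q * (N * K)%:Z = (q * K%:Z) * N%:Z by rewrite PoszM; ring.
  by rewrite modzMDl.
rewrite /sseq /aseq hrk Enat; congr (_ * _).
have hrN : ((r %/ N)%N)%:Z * N%:Z = r%:Z - k'%:Z.
  by rewrite {2}(divn_eq r N) hrk PoszD PoszM addrK.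
have hD' : D - ((r %/ N)%N)%:Z = q * K%:Z.
  apply: (mulIf N0z); rewrite mulrBl hrN.
  have -> : D * N%:Z = x - k'%:Z by rewrite hD addrK.
  rewrite [X in X - _ - _]hx hr PoszM; ring.
have -> : D = (D - ((r %/ N)%N)%:Z) + ((r %/ N)%N)%:Z by ring.
rewrite mulrDl ED // hD' (@E_dvd R K K0 (q * K%:Z * (f k')%:Z)) ?mul1r ?PoszM //.
by rewrite mulrAC dvdz_mull // dvdzz.
Qed.

Lemma conjM' (x y : R[i]) : (x * y)^* = x^* * y^*.
Proof. exact: rmorphM. Qed.

Definition kp (tau : int) (k : nat) := modI N (k%:Z + tau).
Definition qq (tau : int) (k : nat) : int := ((k%:Z + tau) %/ N%:Z)%Z.
Definition ee (tau v : int) (k : nat) : int := (f k)%:Z - (f (kp tau k))%:Z + v.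
Definition CC i j tau v k :=
  h i k * (h j (kp tau k))^* * omega R (N * K) ^ (v * k%:Z) *
  E R K (- (qq tau k * (f (kp tau k))%:Z)).

Lemma AF_formula i j tau v :
  AF (N * K) (sseq N K f h i) (sseq N K f h j) tau v =
  \sum_(k < N) CC i j tau v k * (if (K %| ee tau v k)%Z then K%:R else 0).
Proof.
rewrite /AF (@sum_split _ N K (fun m => sseq N K f h i m *
  (sseq N K f h j (modI (N * K) (m%:Z + tau)))^* * omega R (N * K) ^ (v * m%:Z))).
rewrite exchange_big /=; apply: eq_bigr => k _.
rewrite -geomE // mulr_sumr; apply: eq_bigr => t _.
have hk : modI N ((t * N + k)%N%:Z + tau) = kp tau k.
  rewrite /kp /modI PoszD PoszM -addrA; congr (absz _).
  by rewrite modzMDl.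
rewrite sseq_nat // (@sseq_shift j _ (t%:Z + qq tau k)); last first.
  rewrite hk /kp /modI gez0_abs ?modz_ge0 ?eqz_nat -?lt0n //.
  have := divz_eq (k%:Z + tau) N%:Z; rewrite /qq PoszD PoszM mulrDl.
  by move=> e; rewrite -addrA {1}e addrA.
rewrite hk.
have hWt : E R K (v * t%:Z) = omega R (N * K) ^ (v * (t%:Z * N%:Z)).
  rewrite /E -(@omegaNK R N K N0 K0) exprnP exprz_exp.
  have -> : N%:Z * (v * t%:Z) = v * (t%:Z * N%:Z) by ring.
  by [].
have hW : omega R (N * K) ^ (v * (t * N + k)%N%:Z) =
          omega R (N * K) ^ (v * k%:Z) * E R K (v * t%:Z).
  rewrite hWt PoszD PoszM mulrDr expfzDr; last by apply: omega_neq0; rewrite muln_gt0 N0.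
  by rewrite mulrC.
rewrite hW conjM' (@E_conj R K K0) (@EXn R K).
have hE : E R K (t%:Z * (f k)%:Z) * E R K (- ((t%:Z + qq tau k) * (f (kp tau k))%:Z)) *
   E R K (v * t%:Z) = E R K (- (qq tau k * (f (kp tau k))%:Z)) * E R K (ee tau v k * t%:Z).
  rewrite -!(@ED R K K0).
  have -> : t%:Z * (f k)%:Z + - ((t%:Z + qq tau k) * (f (kp tau k))%:Z) + v * t%:Z =
     - (qq tau k * (f (kp tau k))%:Z) + ee tau v k * t%:Z by rewrite /ee; ring.
  by [].
rewrite /CC -[RHS]mulrA -hE.
ring.
Qed.

Lemma kp0 k : (k < N)%N -> kp 0 k = k.
Proof.
move=> kN; rewrite /kp /modI addr0 modz_small //.
Qed.

Lemma qq0 k : (k < N)%N -> qq 0 k = 0.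
Proof. by move=> kN; rewrite /qq addr0 divz_small // ltz_nat. Qed.

Lemma notdvd_small v : v != 0 -> - K%:Z < v < K%:Z -> ~~ (K %| v)%Z.
Proof.
move=> v0 /andP [v1 v2]; rewrite dvdzE; apply/negP => /(dvdn_leq _).
have : (0 < `|v|)%N by rewrite absz_gt0.
move=> p /(_ p); lia.
Qed.

Lemma AF_zero i j v : v != 0 -> - K%:Z < v < K%:Z ->
  AF (N * K) (sseq N K f h i) (sseq N K f h j) 0 v = 0.
Proof.
move=> v0 vb; rewrite AF_formula big1 // => k _.
by rewrite /ee kp0 // subrr add0r ifN ?mulr0 // notdvd_small.
Qed.

Lemma AF_00 i j : AF (N * K) (sseq N K f h i) (sseq N K f h j) 0 0 =
  K%:R * \sum_(n < N) h i n * (h j n)^*.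
Proof.
rewrite AF_formula mulr_sumr; apply: eq_bigr => k _.
rewrite /ee kp0 // subrr add0r dvdz0 /CC kp0 // qq0 // !mul0r oppr0 expr0z.
by rewrite /E expr0z !mulr1 mulrC.
Qed.

Lemma CC_norm i j tau v k : (forall i n, (i < N)%N -> (n < N)%N -> `|h i n| = 1) ->
  (i < N)%N -> (j < N)%N -> (k < N)%N -> `|CC i j tau v k| = 1.
Proof.
move=> Hu iN jN kN; rewrite /CC !normrM norm_conjC !Hu ?modI_lt //.
have hW : `|omega R (N * K) ^ (v * k%:Z)| = 1.
  by apply: normXz; apply: omega_norm; rewrite muln_gt0 N0.
by rewrite hW (@E_norm R K K0) !mul1r.
Qed.

Lemma AF_bound i j tau v : (forall i n, (i < N)%N -> (n < N)%N -> `|h i n| = 1) ->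
  (i < N)%N -> (j < N)%N ->
  (forall k1 k2 : nat, (k1 < N)%N -> (k2 < N)%N ->
     (K %| ee tau v k1)%Z -> (K %| ee tau v k2)%Z -> k1 = k2) ->
  `|AF (N * K) (sseq N K f h i) (sseq N K f h j) tau v| <= K%:R.
Proof.
move=> Hu iN jN uq; rewrite AF_formula.
case: (pickP (fun k : 'I_N => (K %| ee tau v k)%Z)) => [k0 P0 | none].
  rewrite (bigD1 k0) //= big1 ?addr0 => [|k nk].
    by rewrite P0 normrM CC_norm // mul1r normr_nat.
  case: ifP => Pk; last by rewrite mulr0.
  by move: nk; rewrite -val_eqE /= (uq k k0 (ltn_ord k) (ltn_ord k0) Pk P0) eqxx.
rewrite (eq_bigr (fun _ => 0)) => [|k _]; last by rewrite none mulr0.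
by rewrite big1_eq normr0 ler0n.
Qed.

End Main.

Theorem theorem1 (R : realType) (N K Zx Zy : nat) (f : nat -> nat)
  (h : nat -> nat -> R[i])
  (HNodd : odd N) (HN2 : (2 < N)%N) (HK : (0 < K)%N)
  (HZx : (0 < Zx <= N)%N) (HZy : (0 < Zy <= K)%N)
  (Hfrange : forall k, (k < N)%N -> (f k < K)%N)
  (Hf : forall a b : int,
      - Zx%:Z < a < Zx%:Z -> a != 0 -> - Zy%:Z < b < Zy%:Z ->
      forall x1 x2 : nat, (x1 < N)%N -> (x2 < N)%N ->
      ((f (modI N (x1%:Z + a)))%:Z - (f x1)%:Z == b %[mod K%:Z])%Z ->
      ((f (modI N (x2%:Z + a)))%:Z - (f x2)%:Z == b %[mod K%:Z])%Z ->
      x1 = x2)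
  (Hunimod : forall i n, (i < N)%N -> (n < N)%N -> `|h i n| = 1)
  (Hcorr : forall i j, (i < N)%N -> (j < N)%N -> i != j ->
      `|\sum_(n < N) h i n * (h j n)^*| <= 1)
  (Hcorrv : forall i j v, (i < N)%N -> (j < N)%N -> i != j -> (v < N)%N ->
      `|\sum_(n < N) h i n * (h j n)^* * (omega R N) ^+ (n * v)| < N%:R) :
  forall tau v : int, - Zx%:Z < tau < Zx%:Z -> - Zy%:Z < v < Zy%:Z ->
    (forall i, (i < N)%N -> (tau, v) != (0, 0) ->
       `|AF (N * K)%N (sseq N K f h i) (sseq N K f h i) tau v| <= K%:R)
    /\
    (forall i j, (i < N)%N -> (j < N)%N -> i != j ->
       `|AF (N * K)%N (sseq N K f h i) (sseq N K f h j) tau v| <= K%:R).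
Proof.
move=> tau v /andP [t1 t2] /andP [v1 v2].
have N0 : (0 < N)%N by apply: ltn_trans HN2.
have vK : - K%:Z < v < K%:Z by apply/andP; split; lia.
have bound : forall i j, (i < N)%N -> (j < N)%N -> tau != 0 ->
    `|AF (N * K)%N (sseq N K f h i) (sseq N K f h j) tau v| <= K%:R.
  move=> i j iN jN t0; apply: AF_bound => // k1 k2 k1N k2N P1 P2.
  apply: (Hf tau v _ t0 _ k1 k2 k1N k2N); rewrite ?t1 ?t2 ?v1 ?v2 //.
    rewrite eqz_mod_dvd.
    have -> : (f (modI N (k1%:Z + tau)))%:Z - (f k1)%:Z - v = - ee N f tau v k1.
      by rewrite /ee /kp; ring.
    by rewrite rpredN.
  rewrite eqz_mod_dvd.
  have -> : (f (modI N (k2%:Z + tau)))%:Z - (f k2)%:Z - v = - ee N f tau v k2.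
    by rewrite /ee /kp; ring.
  by rewrite rpredN.
split.
  move=> i iN ne; have [t0|t0] := eqVneq tau 0; last exact: bound.
  subst tau; move: ne; rewrite xpair_eqE eqxx /= => v0.
  by rewrite AF_zero // normr0 ler0n.
move=> i j iN jN ij; have [t0|t0] := eqVneq tau 0; last exact: bound.
subst tau; have [v0|v0] := eqVneq v 0; last by rewrite AF_zero // normr0 ler0n.
subst v; rewrite AF_00 // normrM normr_nat -[X in _ <= X]mulr1 ler_wpM2l ?ler0n //.
exact: Hcorr.
Qed.
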